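(* Let $E$ be a finite set with $m=|E|\ge1$ and let $\mu$ be an exchangeable measure over the subsets of $E$, i.e. $\mu(F)=c(|F|)$ for some non-negative numbers $c(0),\dots,c(m)$. Then $\mu$ is cavity-monotone if and only if (1) $c$ is log-concave, i.e. $c(k)^2\ge c(k-1)c(k+1)$ for all $0<k<m$, and (2) the support $\{0\le k\le m: c(k)>0\}$ is an interval containing $0$ and $1$. In particular, for every $b\ge1$ the measure $\mu(F)=\mathbf 1(|F|\le b)$ is cavity-monotone.
   Context: Let $E$ be a finite set. A measure over the subsets of $E$ is a function $\mu:2^E\to[0,\infty)$. For $\mathbf w\in(0,\infty)^E$, $\mathbb P^{\mathbf w}_\mu$ is the law of a random subset $\mathcal F\subseteq E$ with $\mathbb P^{\mathbf w}_\mu(\mathcal F=F)=\mu(F)\prod_{e\in F}w_e/Z(\mathbf w)$, where $Z(\mathbf w)=\sum_{F}\mu(F)\prod_{e\in F}w_e$. $\mu$ is Rayleigh if for all $\mathbf w\in(0,\infty)^E$ and all $e\neq f$ in $E$, $\mathbb P^{\mathbf w}_\mu(e\in\mathcal F,f\in\mathcal F)\le\mathbb P^{\mathbf w}_\mu(e\in\mathcal F)\mathbb P^{\mathbf w}_\mu(f\in\mathcal F)$. $\mu$ is size-increasing if for all $\mathbf w\in(0,\infty)^E$ and all $e\in E$, $\mathbb E^{\mathbf w}_\mu[|\mathcal F|\mathbf 1_{e\in\mathcal F}]>\mathbb E^{\mathbf w}_\mu[|\mathcal F|]\,\mathbb P^{\mathbf w}_\mu(e\in\mathcal F)$. $\mu$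 is cavity-monotone if $\mu(\emptyset)>0$ and $\mu$ is Rayleigh and size-increasing. *)

(* Defs.v *)
From HB Require Import structures.
From mathcomp Require Import all_boot all_order all_algebra.
Set Implicit Arguments. Unset Strict Implicit. Unset Printing Implicit Defensive.
Import Order.TTheory GRing.Theory Num.Theory.
Local Open Scope ring_scope.

Section Measures.
Variables (R : rcfType) (E : finType).

(* A measure over the subsets of E: mu : 2^E -> [0,oo) (nonnegativity is
   assumed separately where needed). *)
Definition weight (w : E -> R) (F : {set E}) : R := \prod_(e in F) w e.

Definition partZ (mu : {set E} -> R) (w : E -> R) : R :=
  \sum_(F : {set E}) mu F * weight w F.

Definition prob (mu : {set E} -> R) (w : E -> R) (P : pred {set E}) : R :=
  (\sum_(F : {set E} | P F) mu F * weight w F) / partZ mu w.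

Definition expect (mu : {set E} -> R) (w : E -> R) (f : {set E} -> R) : R :=
  (\sum_(F : {set E}) mu F * weight w F * f F) / partZ mu w.

Definition posw (w : E -> R) : Prop := forall e, 0 < w e.

Definition rayleigh (mu : {set E} -> R) : Prop :=
  forall w, posw w -> forall e f : E, e != f ->
    prob mu w (fun F => (e \in F) && (f \in F))
      <= prob mu w (fun F => e \in F) * prob mu w (fun F => f \in F).

Definition size_increasing (mu : {set E} -> R) : Prop :=
  forall w, posw w -> forall e : E,
    expect mu w (fun F => #|F|%:R * (e \in F)%:R)
      > expect mu w (fun F => #|F|%:R) * prob mu w (fun F => e \in F).

Definition cavity_monotone (mu : {set E} -> R) : Prop :=
  0 < mu set0 /\ rayleigh mu /\ size_increasing mu.

End Measures.

Definition log_concave (R : rcfType) (m : nat) (c : nat -> R) : Prop :=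
  forall k : nat, (0 < k)%N -> (k < m)%N -> c k.-1 * c k.+1 <= c k ^+ 2.

Definition support_interval_01 (R : rcfType) (m : nat) (c : nat -> R) : Prop :=
  0 < c 0%N /\ 0 < c 1%N /\
  forall i j k : nat, (i <= j)%N -> (j <= k)%N -> (k <= m)%N ->
    0 < c i -> 0 < c k -> 0 < c j.

(* Main.v *)
Require Import Defs.
From HB Require Import structures.
From mathcomp Require Import all_boot all_order all_algebra.
From Stdlib Require Import Ring Classical Lia FunctionalExtensionality.
Import Order.TTheory GRing.Theory Num.Theory.
Ltac tolia := repeat match goal with
 | H : is_true (leq _ _) |- _ => move/ssrnat.leP: H => H
 | H : context [addn _ _] |- _ => rewrite -plusE in H
 | H : context [subn _ _] |- _ => rewrite -minusE in H
 end; try apply/ssrnat.leP; rewrite -?plusE -?minusE; lia.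
Set Implicit Arguments. Unset Strict Implicit. Unset Printing Implicit Defensive.
Local Open Scope ring_scope.

Section Abs.
Variables (T : Type) (zr on : T) (A M : T -> T -> T) (sb : T -> T -> T) (N : T -> T).
Hypothesis Hth : ring_theory zr on A M sb N (@eq T).
Add Ring AbsR : Hth.

Lemma abs_expand2 a b c d y :
  M (A a (M y b)) (A c (M y d)) =
  A (A (M a c) (M y (A (M a d) (M b c)))) (M (M y y) (M b d)).
Proof. ring. Qed.

Lemma abs_gupd d0 d1 dk dk1 b0 b1 bk bk1 y K :
  A (A (M (A d0 (M y d1)) (A bk (M y (A bk1 dk1))))
       (N (M (A b0 (M y (A b1 d1))) (A dk (M y dk1)))))
    (M (A K on) (M (A d0 (M y d1)) (A dk (M y dk1)))) =
  A (A (A (A (M d0 bk) (N (M b0 dk))) (M (A K on) (M d0 dk)))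
       (M y (A (A (A (M d0 bk1) (N (M b0 dk1))) (M (A (A K on) on) (M d0 dk1)))
               (A (A (M d1 bk) (N (M b1 dk))) (M K (M d1 dk))))))
    (M (M y y) (A (A (M d1 bk1) (N (M b1 dk1))) (M (A K on) (M d1 dk1)))).
Proof. ring. Qed.

Lemma abs_quad a b c d p q e :
  A (M (A a (M e b)) (A c (M e d))) (N (M (A p (M e q)) (A p (M e q)))) =
  A (A (A (M a c) (N (M p p)))
       (M e (A (A (M a d) (M b c)) (N (A (M p q) (M p q))))))
    (M (M e e) (A (M b d) (N (M q q)))).
Proof. ring. Qed.

(* Rayleigh: Se*Sf - Sef*Z = we wf (D1^2 - D0 D2) *)
Lemma abs_ray we wf d0 d1 d2 :
  A (M (M we (A d1 (M wf d2))) (M wf (A d1 (M we d2))))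
    (N (M (M we (M wf d2)) (A (A d0 (M we d1)) (A (M wf d1) (M we (M wf d2)))))) =
  M (M we wf) (A (M d1 d1) (N (M d0 d2))).
Proof. ring. Qed.

(* size: N1 Z - N2 Pe *)
Lemma abs_size we d0 d1 b0 b1 :
  A (M (M we (A b1 d1)) (A d0 (M we d1)))
    (N (M (A b0 (M we (A b1 d1))) (M we d1))) =
  M we (A (A (M d0 b1) (N (M b0 d1))) (M on (M d0 d1))).
Proof. ring. Qed.

Lemma abs_shuf4 a b c d :
  M (M a b) (M c d) = M (M a d) (M b c).
Proof. ring. Qed.

Lemma abs_contr e a b c d ei :
  M e ei = on ->
  M (M e e) (M (A a (M ei b)) (A c (M ei d))) = M (A b (M e a)) (A d (M e c)).
Proof. intro H. transitivity (M (A (M e a) (M (M e ei) b)) (A (M e c) (M (M e ei) d))); [ring|]. rewrite H. ring. Qed.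
Lemma abs_bterm n a y b :
  M (M (A n on) a) (M y b) = A (M y (M (M n a) b)) (M y (M a b)).
Proof. ring. Qed.
Lemma abs_acx a b c d : M a (M b (M c d)) = M c (M b (M a d)).
Proof. ring. Qed.
Lemma abs_div1 a z zi : M zi z = on -> M (M a zi) (M z z) = M a z.
Proof. intro H. transitivity (M (M a (M zi z)) z); [ring|]. rewrite H. ring. Qed.
Lemma abs_div2 a b z zi : M zi z = on -> M (M (M a zi) (M b zi)) (M z z) = M a b.
Proof. intro H. transitivity (M (M (M a (M zi z)) b) (M zi z)); [ring|]. rewrite H. ring. Qed.
Lemma abs_bt2 a y b n : M (M a (M y b)) (M (A n on) on) = A (M y (M (M n a) b)) (M y (M a b)).
Proof. ring. Qed.
Lemma abs_bt3 a y b n : M (M a (M y b)) (A n on) = A (M y (M (M n a) b)) (M y (M a b)).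
Proof. ring. Qed.
Lemma abs_bt4 a b n : M (M a b) n = M (M n a) b.
Proof. ring. Qed.
End Abs.

Section Main.
Variables (R : rcfType) (E : finType).

Lemma Rth : @ring_theory R 0 1 +%R *%R (fun x y => x - y) -%R eq.
Proof.
split=> //; [exact: add0r|exact: addrC|exact: addrA|exact: mul1r|exact: mulrC|exact: mulrA|exact: mulrDl|exact: subrr].
Qed.

Lemma expand2 (a b c d y : R) :
  (a + y * b) * (c + y * d) = a * c + y * (a * d + b * c) + y * y * (b * d).
Proof. exact (@abs_expand2 _ _ _ _ _ _ _ Rth a b c d y). Qed.

Lemma quadR (a b c d p q e : R) :
  (a + e * b) * (c + e * d) - (p + e * q) * (p + e * q) =
  (a * c - p * p) + e * (a * d + b * c - (p * q + p * q)) + e * e * (b * d - q * q).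
Proof. exact (@abs_quad _ _ _ _ _ _ _ Rth a b c d p q e). Qed.

Lemma rayR (we wf d0 d1 d2 : R) :
  (we * (d1 + wf * d2)) * (wf * (d1 + we * d2)) -
  (we * (wf * d2)) * ((d0 + we * d1) + (wf * d1 + we * (wf * d2))) =
  (we * wf) * (d1 * d1 - d0 * d2).
Proof. exact (@abs_ray _ _ _ _ _ _ _ Rth we wf d0 d1 d2). Qed.

Lemma sizeR (we d0 d1 b0 b1 : R) :
  (we * (b1 + d1)) * (d0 + we * d1) - (b0 + we * (b1 + d1)) * (we * d1) =
  we * (d0 * b1 - b0 * d1 + 1 * (d0 * d1)).
Proof. exact (@abs_size _ _ _ _ _ _ _ Rth we d0 d1 b0 b1). Qed.

Lemma gupdR (d0 d1 dk dk1 b0 b1 bk bk1 y K : R) :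
  (d0 + y * d1) * (bk + y * (bk1 + dk1)) - (b0 + y * (b1 + d1)) * (dk + y * dk1)
   + (K + 1) * ((d0 + y * d1) * (dk + y * dk1)) =
  (d0 * bk - b0 * dk + (K + 1) * (d0 * dk))
  + y * ((d0 * bk1 - b0 * dk1 + (K + 1 + 1) * (d0 * dk1))
         + (d1 * bk - b1 * dk + K * (d1 * dk)))
  + y * y * (d1 * bk1 - b1 * dk1 + (K + 1) * (d1 * dk1)).
Proof. exact (@abs_gupd _ _ _ _ _ _ _ Rth d0 d1 dk dk1 b0 b1 bk bk1 y K). Qed.

Lemma btermR (n a y b : R) : (n + 1) * a * (y * b) = y * (n * a * b) + y * (a * b).
Proof. exact (@abs_bterm _ _ _ _ _ _ _ Rth n a y b). Qed.

Lemma acx (a b c d : R) : a * (b * (c * d)) = c * (b * (a * d)).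
Proof. exact (@abs_acx _ _ _ _ _ _ _ Rth a b c d). Qed.

Lemma div1R (a z : R) : z != 0 -> a / z * (z * z) = a * z.
Proof. move=> h; exact (@abs_div1 _ _ _ _ _ _ _ Rth a z z^-1 (mulVf h)). Qed.
Lemma div2R (a b z : R) : z != 0 -> a / z * (b / z) * (z * z) = a * b.
Proof. move=> h; exact (@abs_div2 _ _ _ _ _ _ _ Rth a b z z^-1 (mulVf h)). Qed.

Lemma bt2R (a y b n : R) : a * (y * b) * ((n + 1) * 1) = y * (n * a * b) + y * (a * b).
Proof. exact (@abs_bt2 _ _ _ _ _ _ _ Rth a y b n). Qed.
Lemma bt3R (a y b n : R) : a * (y * b) * (n + 1) = y * (n * a * b) + y * (a * b).
Proof. exact (@abs_bt3 _ _ _ _ _ _ _ Rth a y b n). Qed.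
Lemma bt4R (a b n : R) : a * b * n = n * a * b.
Proof. exact (@abs_bt4 _ _ _ _ _ _ _ Rth a b n). Qed.

Lemma shuf4 (a b c d : R) : (a * b) * (c * d) = (a * d) * (b * c).
Proof. exact (@abs_shuf4 _ _ _ _ _ _ _ Rth a b c d). Qed.

Lemma contrR (e a b c d : R) : e != 0 ->
  (e * e) * ((a + e^-1 * b) * (c + e^-1 * d)) = (b + e * a) * (d + e * c).
Proof. move=> he. exact (@abs_contr _ _ _ _ _ _ _ Rth e a b c d e^-1 (mulfV he)). Qed.


Implicit Types (V G : {set E}) (x : E) (g h : {set E} -> R) (u v : nat -> R) (w : E -> R).

Definition SS (V : {set E}) (g : {set E} -> R) : R :=
  \sum_(G : {set E} | G \subset V) g G.

Lemma SS_split V x g : x \in V ->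
  SS V g = SS (V :\ x) (fun G => g G + g (x |: G)).
Proof.
move=> xV; rewrite /SS big_split /= (bigID (fun G => x \in G)) /= addrC.
congr (_ + _).
  by apply: eq_bigl => G; rewrite subsetD1.
rewrite (reindex_onto (fun G => x |: G) (fun G => G :\ x)) /=; last first.
  by move=> G /andP[_ xG]; rewrite setD1K.
apply: eq_bigl => G; apply/idP/idP.
  case/andP=> /andP[sV _] /eqP <-.
  rewrite subsetD1 setD11 andbT; apply: subset_trans sV; exact: subD1set.
rewrite subsetD1 => /andP[sG xG].
rewrite setU11 andbT setU1K // eqxx andbT.
by rewrite subUset sub1set xV sG.
Qed.

Lemma SS_set0 g : SS set0 g = g set0.
Proof.
rewrite /SS (big_pred1 set0) // => G; by rewrite subset0.
Qed.

Lemma SS_all g : \sum_(F : {set E}) g F = SS setT g.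
Proof. by rewrite /SS; apply: eq_bigl => G; rewrite subsetT. Qed.

Lemma SS_ge V G0 g : G0 \subset V -> (forall G, G \subset V -> 0 <= g G) ->
  g G0 <= SS V g.
Proof.
move=> sG hg; rewrite /SS (bigD1 G0) //= lerDl.
by apply: sumr_ge0 => G /andP[/hg].
Qed.

Lemma SS_ge0 V g : (forall G, G \subset V -> 0 <= g G) -> 0 <= SS V g.
Proof. by move=> hg; apply: sumr_ge0. Qed.

Lemma SS_eq V g h : (forall G, G \subset V -> g G = h G) -> SS V g = SS V h.
Proof. by move=> hg; apply: eq_bigr. Qed.

Lemma weightU1 (w : E -> R) x G : x \notin G -> weight w (x |: G) = w x * weight w G.
Proof. by move=> xG; rewrite /weight big_setU1. Qed.

Lemma weight_ge0 (w : E -> R) V G : (forall x, x \in V -> 0 < w x) -> G \subset V ->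
  0 < weight w G.
Proof.
move=> hw sG; rewrite /weight; apply: prodr_gt0 => x xG; apply: hw.
exact: (subsetP sG).
Qed.

Lemma weight_eqw (w w' : E -> R) G : (forall x, x \in G -> w x = w' x) ->
  weight w G = weight w' G.
Proof. by move=> h; apply: eq_bigr. Qed.

Lemma weight0 (w : E -> R) : weight w set0 = 1.
Proof. by rewrite /weight big_set0. Qed.

Definition Dv (u : nat -> R) (w : E -> R) (V : {set E}) (s : nat) : R :=
  SS V (fun G => u (#|G| + s)%N * weight w G).
Definition Bv (u : nat -> R) (w : E -> R) (V : {set E}) (s : nat) : R :=
  SS V (fun G => #|G|%:R * u (#|G| + s)%N * weight w G).

Lemma cardU1n x (G : {set E}) : x \notin G -> #|x |: G| = #|G|.+1.
Proof. by move=> xG; rewrite cardsU1 xG. Qed.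

Lemma Dv_split u w V x s : x \in V ->
  Dv u w V s = Dv u w (V :\ x) s + w x * Dv u w (V :\ x) s.+1.
Proof.
move=> xV; rewrite /Dv (SS_split _ xV) /SS big_split /= mulr_sumr.
congr (_ + _); apply: eq_bigr => G; rewrite subsetD1 => /andP[_ xG].
by rewrite weightU1 // cardU1n // addSn -addnS mulrCA.
Qed.

Lemma Bv_split u w V x s : x \in V ->
  Bv u w V s = Bv u w (V :\ x) s + w x * (Bv u w (V :\ x) s.+1 + Dv u w (V :\ x) s.+1).
Proof.
move=> xV; rewrite /Bv /Dv (SS_split _ xV) /SS big_split /=.
congr (_ + _); rewrite mulrDr !mulr_sumr -big_split /=; apply: eq_bigr => G; rewrite subsetD1 => /andP[_ xG].
rewrite weightU1 // cardU1n // addSn -addnS mulrSr.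
exact: btermR.
Qed.

Lemma Dv_eqw u w w' V s : (forall x, x \in V -> w x = w' x) -> Dv u w V s = Dv u w' V s.
Proof.
move=> h; apply: SS_eq => G sG; congr (_ * _); apply: weight_eqw => x xG.
by apply: h; apply: (subsetP sG).
Qed.

Lemma Dv_ext u v w V s : (forall n, u n = v n) -> Dv u w V s = Dv v w V s.
Proof. by move=> h; apply: SS_eq => G _; rewrite h. Qed.

Lemma Dv_set0 u w s : Dv u w set0 s = u s.
Proof. by rewrite /Dv SS_set0 cards0 add0n weight0 mulr1. Qed.

Lemma Bv_set0 u w s : Bv u w set0 s = 0.
Proof. by rewrite /Bv SS_set0 cards0 mul0r mul0r. Qed.

Lemma Dv_ge0 u w V s : (forall n, 0 <= u n) -> (forall x, x \in V -> 0 < w x) -> 0 <= Dv u w V s.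
Proof.
move=> hu hw; apply: SS_ge0 => G sG; apply: mulr_ge0 => //.
exact/ltW/(weight_ge0 hw).
Qed.


Lemma normN_le (y : R) : - `|y| <= y.
Proof. by rewrite lerNl -normrN ler_norm. Qed.

Lemma QL (a b c d p q : R) :
  (forall e, 0 < e -> (a + e * b) * (c + e * d) <= (p + e * q) * (p + e * q)) ->
  a * c <= p * p.
Proof.
move=> H; rewrite leNgt; apply/negP => hlt.
set al := a * c - p * p.
have alp : 0 < al by rewrite subr_gt0.
set be := a * d + b * c - (p * q + p * q).
set ga := b * d - q * q.
set K := `|be| + `|ga|.
have K0 : 0 <= K by rewrite /K; apply: addr_ge0.
set D := al + K + K.
have KD : K < D.
  rewrite /D; apply: (lt_le_trans (_ : K < al + K)); first by rewrite ltrDr.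
  by rewrite lerDl.
have D0 : 0 < D by apply: le_lt_trans KD.
set e := al / D.
have e0 : 0 < e by rewrite divr_gt0.
have e1 : e <= 1.
  rewrite /e ler_pdivrMr // mul1r /D -addrA lerDl; exact: addr_ge0.
have eK : e * K < al.
  by rewrite /e mulrAC ltr_pdivrMr // ltr_pM2l.
have := H e e0; rewrite -subr_le0 quadR -/al -/be -/ga => H2.
move: K0 KD D0 e0 e1 eK H2; rewrite /K; clearbody al be ga D e => K0 KD D0 e0 e1 eK H2.
have : al - e * K <= al + e * be + e * e * ga.
  rewrite -addrA lerD2l mulrDr opprD.
  apply: lerD.
    rewrite -mulrN; apply: ler_wpM2l; [exact: ltW|exact: normN_le].
  have h1 : - (e * `|ga|) <= - (e * e * `|ga|).
    by rewrite lerN2; apply: ler_wpM2r => //; rewrite ger_pMr.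
  apply: le_trans h1 _; rewrite -mulrN; apply: ler_wpM2l.
    by rewrite mulr_ge0 // ltW.
  exact: normN_le.
move=> h3; have := le_trans h3 H2; rewrite subr_le0 => /(lt_le_trans eK).
by rewrite ltxx.
Qed.

Definition PR (u : nat -> R) V : Prop :=
  forall w, (forall x, x \in V -> 0 < w x) ->
    Dv u w V 0 * Dv u w V 2 <= Dv u w V 1 * Dv u w V 1.

Lemma PR_ext u v V : (forall n, u n = v n) -> PR u V -> PR v V.
Proof.
move=> h P w hw; rewrite -!(@Dv_ext u v) //; exact: P.
Qed.

Lemma PR_del u V x : x \in V -> PR u V -> PR u (V :\ x).
Proof.
move=> xV P w hw.
apply: (QL (b := Dv u w (V :\ x) 1) (d := Dv u w (V :\ x) 3) (q := Dv u w (V :\ x) 2)) => ep ep0.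
pose w' := fun z => if z == x then ep else w z.
have hw' : forall z, z \in V -> 0 < w' z.
  move=> z zV; rewrite /w'; case: eqP => // /eqP zx; apply: hw.
  by rewrite in_setD1 zx.
have := P w' hw'.
have eqw : forall s, Dv u w' V s = Dv u w (V :\ x) s + ep * Dv u w (V :\ x) s.+1.
  move=> s; rewrite (Dv_split _ _ _ xV) {2}/w' eqxx.
  by rewrite !(@Dv_eqw u w' w) // => z; rewrite in_setD1 /w' => /andP[/negbTE ->].
by rewrite !eqw.
Qed.

Lemma PR_con u V x : x \in V -> PR u V -> PR (fun n => u n.+1) (V :\ x).
Proof.
move=> xV P w hw.
have sh : forall s, Dv (fun n => u n.+1) w (V :\ x) s = Dv u w (V :\ x) s.+1.
  by move=> s; apply: SS_eq => G _; rewrite addnS.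
rewrite !sh.
apply: (QL (b := Dv u w (V :\ x) 0) (d := Dv u w (V :\ x) 2) (q := Dv u w (V :\ x) 1)) => ep ep0.
pose w' := fun z => if z == x then ep^-1 else w z.
have hw' : forall z, z \in V -> 0 < w' z.
  move=> z zV; rewrite /w'; case: eqP => [_|/eqP zx]; first by rewrite invr_gt0.
  by apply: hw; rewrite in_setD1 zx.
have := P w' hw'.
have eqw : forall s, Dv u w' V s = Dv u w (V :\ x) s + ep^-1 * Dv u w (V :\ x) s.+1.
  move=> s; rewrite (Dv_split _ _ _ xV) {2}/w' eqxx.
  by rewrite !(@Dv_eqw u w' w) // => z; rewrite in_setD1 /w' => /andP[/negbTE ->].
rewrite !eqw => H.
have ep2 : 0 <= ep * ep by rewrite mulr_ge0 // ltW.
have ne0 : ep != 0 by rewrite gt_eqF.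
rewrite -contrR // -[X in _ <= X](contrR _ _ _ _ ne0).
exact: ler_wpM2l.
Qed.

Lemma PR_con_n p : forall u V, PR u V -> (p <= #|V|)%N ->
  exists V', #|V'| = (#|V| - p)%N /\ PR (fun n => u (n + p)%N) V'.
Proof.
elim: p => [|p IH] u V P hp.
  by exists V; rewrite subn0; split=> //; apply: PR_ext P => n; rewrite addn0.
have : (0 < #|V|)%N by apply: leq_trans hp.
rewrite card_gt0 => /set0Pn[x xV].
have hc : #|V| = #|V :\ x|.+1 by rewrite (cardsD1 x) xV.
have hp' : (p <= #|V :\ x|)%N by rewrite -ltnS -hc.
have [V' [c1 P1]] := IH _ _ (PR_con xV P) hp'.
exists V'; split; first by rewrite c1 hc subSS.
by apply: PR_ext P1 => n; rewrite addnS.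
Qed.

Lemma PR_del_n q : forall u V, PR u V -> (q <= #|V|)%N ->
  exists V', #|V'| = (#|V| - q)%N /\ PR u V'.
Proof.
elim: q => [|q IH] u V P hq.
  by exists V; rewrite subn0.
have : (0 < #|V|)%N by apply: leq_trans hq.
rewrite card_gt0 => /set0Pn[x xV].
have hc : #|V| = #|V :\ x|.+1 by rewrite (cardsD1 x) xV.
have hq' : (q <= #|V :\ x|)%N by rewrite -ltnS -hc.
have [V' [c1 P1]] := IH _ _ (PR_del xV P) hq'.
by exists V'; split; first by rewrite c1 hc subSS.
Qed.

Lemma PR_base u V : #|V| = 0%N -> PR u V -> u 0%N * u 2%N <= u 1%N * u 1%N.
Proof.
move/eqP; rewrite cards_eq0 => /eqP -> P.
by have := P (fun _ => 1) (fun x (hx : x \in set0) => ltac:(by rewrite in_set0 in hx)); rewrite !Dv_set0.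
Qed.

Lemma PR_lc u V k : PR u V -> (0 < k)%N -> (k.-1 <= #|V|)%N ->
  u k.-1 * u k.+1 <= u k * u k.
Proof.
case: k => // k P _ /= hk.
have [V1 [c1 P1]] := PR_con_n P hk.
have [V2 [c2 P2]] := PR_del_n P1 (leqnn #|V1|).
have c0 : #|V2| = 0%N by rewrite c2 subnn.
have := PR_base c0 P2.
by rewrite !add0n !addSn !add0n.
Qed.

Lemma PR_gap u V (i gg : nat) : PR u V -> (forall n, 0 <= u n) -> (2 <= gg)%N ->
  (i + gg <= #|V| + 2)%N -> 0 < u i -> 0 < u (i + gg)%N ->
  (forall hh : nat, (0 < hh)%N -> (hh < gg)%N -> u (i + hh)%N = 0) -> False.
Proof.
move=> P u0 g2 hig ui uig hz.
have hi : (i <= #|V|)%N.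
  move: g2 hig; clear; move: #|V| => n; move=> g2 hig; tolia.
have [V1 [c1 P1]] := PR_con_n P hi.
have hq : ((#|V| - i) - (gg - 2) <= #|V1|)%N by rewrite c1 leq_subr.
have [W [cW PW]] := PR_del_n P1 hq.
have cW' : #|W| = (gg - 2)%N.
  rewrite cW c1; move: g2 hig; clear; move: #|V| => n; move=> g2 hig; tolia.
have := PW (fun _ => 1) (fun x _ => ltr01).
have D1 : Dv (fun n => u (n + i)%N) (fun _ => 1) W 1 = 0.
  apply: big1 => G sG; rewrite [(_ + i)%N]addnC hz ?mul0r //.
    by rewrite addn1.
  have := subset_leq_card sG; rewrite cW' => h.
  move: h g2; clear; move: #|G| => n h g2; tolia.
rewrite D1 mul0r => H.
have : 0 < Dv (fun n => u (n + i)%N) (fun _ => 1) W 0 *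
           Dv (fun n => u (n + i)%N) (fun _ => 1) W 2.
  apply: mulr_gt0.
    apply: lt_le_trans (_ : u (#|set0 : {set E}| + 0 + i)%N * weight (fun _ => 1) set0 <= _).
      by rewrite cards0 /weight big_set0 mulr1.
    apply: SS_ge (sub0set _) _ => G _; apply: mulr_ge0 => //.
    by rewrite /weight; apply: prodr_ge0 => *; exact: ler01.
  apply: lt_le_trans (_ : u (#|W| + 2 + i)%N * weight (fun _ => 1) W <= _).
    rewrite /weight big1 ?mulr1 // cW'.
    have -> : (gg - 2 + 2 + i = i + gg)%N by move: g2; clear; move=> g2; tolia.
    by [].
  apply: SS_ge (subxx _) _ => G _; apply: mulr_ge0 => //.
  by rewrite /weight; apply: prodr_ge0 => *; exact: ler01.
by rewrite ltNge H.
Qed.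


Definition SLC (u : nat -> R) : Prop :=
  forall i j : nat, (i <= j)%N -> u i * u j.+2 <= u i.+1 * u j.+1.

Lemma SLC_step u (y : R) : SLC u -> 0 <= y -> SLC (fun s => u s + y * u s.+1).
Proof.
move=> H y0 i j ij /=; rewrite !expand2.
apply: lerD; first apply: lerD.
- exact: H.
- apply: ler_wpM2l => //; rewrite [X in X <= _]addrC lerD2l.
  move: ij; rewrite leq_eqVlt => /orP[/eqP <-|ij].
    by rewrite [X in _ <= X]mulrC; apply: H.
  exact: le_trans (H i j.+1 (leqW (ltnW ij))) (H i.+1 j ij).
- by apply: ler_wpM2l; [exact: mulr_ge0|apply: H].
Qed.

Lemma pick_elt V n : #|V| = n.+1 -> exists2 x, x \in V & #|V :\ x| = n.
Proof.
move=> hV; have : (0 < #|V|)%N by rewrite hV.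
rewrite card_gt0 => /set0Pn[x xV]; exists x => //.
by move: hV; rewrite (cardsD1 x) xV add1n => -[].
Qed.

Lemma D_SLC u w : SLC u -> forall n V, #|V| = n -> (forall x, x \in V -> 0 < w x) ->
  SLC (fun s => Dv u w V s).
Proof.
move=> Hu; elim=> [|n IH] V hV hw.
  move/eqP: hV; rewrite cards_eq0 => /eqP ->.
  by move=> i j ij /=; rewrite !Dv_set0; apply: Hu.
have [x xV hV'] := pick_elt hV.
have hw' : forall z, z \in V :\ x -> 0 < w z.
  by move=> z; rewrite in_setD1 => /andP[_]; apply: hw.
move=> i j ij /=; rewrite !(Dv_split _ _ _ xV).
have := SLC_step (IH _ hV' hw') (ltW (hw _ xV)).
by apply.
Qed.

Definition Gf u w V (k s : nat) : R :=
  Dv u w V s * Bv u w V (s + k) - Bv u w V s * Dv u w V (s + k)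
  + k%:R * (Dv u w V s * Dv u w V (s + k)).

Lemma Gf0 u w V s : Gf u w V 0 s = 0.
Proof. by rewrite /Gf addn0 mul0r addr0 mulrC subrr. Qed.

Lemma Gf_split u w V x k s : x \in V ->
  Gf u w V k.+1 s = Gf u w (V :\ x) k.+1 s
    + w x * (Gf u w (V :\ x) k.+2 s + Gf u w (V :\ x) k s.+1)
    + w x * w x * Gf u w (V :\ x) k.+1 s.+1.
Proof.
move=> xV; rewrite /Gf !addnS !addSn !mulrSr.
rewrite !(Dv_split _ _ _ xV) !(Bv_split _ _ _ xV).
exact: gupdR.
Qed.

Lemma G_inv u w : (forall n, 0 <= u n) -> forall n V, #|V| = n ->
  (forall x, x \in V -> 0 < w x) ->
  (forall k s, 0 <= Gf u w V k s) /\ u 0%N * u 1%N <= Gf u w V 1 0.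
Proof.
move=> u0; elim=> [|n IH] V hV hw.
  move/eqP: hV; rewrite cards_eq0 => /eqP ->.
  split=> [k s|]; rewrite /Gf !Dv_set0 !Bv_set0 mulr0 mul0r subrr add0r //.
    by apply: mulr_ge0 => //; apply: mulr_ge0.
  by rewrite mul1r.
have [x xV hV'] := pick_elt hV.
have hw' : forall z, z \in V :\ x -> 0 < w z.
  by move=> z; rewrite in_setD1 => /andP[_]; apply: hw.
have [IH1 IH2] := IH _ hV' hw'.
have wx := ltW (hw _ xV).
have ge : forall k s, Gf u w (V :\ x) k.+1 s <= Gf u w V k.+1 s.
  move=> k s; rewrite (Gf_split _ _ _ _ xV) -addrA lerDl.
  apply: addr_ge0; apply: mulr_ge0 => //; first by apply: addr_ge0.
  exact: mulr_ge0.
split.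
  case=> [|k] s; first by rewrite Gf0.
  exact: le_trans (IH1 _ _) (ge _ _).
exact: le_trans IH2 (ge _ _).
Qed.


Lemma sum_split2 (e f : E) g : e != f ->
  \sum_(F : {set E}) g F =
  SS (setT :\ e :\ f) (fun G => g G + g (e |: G) + (g (f |: G) + g (e |: (f |: G)))).
Proof.
move=> ef; rewrite SS_all (SS_split _ (in_setT e)) (SS_split _ (_ : f \in setT :\ e)) //.
by rewrite in_setD1 in_setT eq_sym ef.
Qed.

Lemma sum_split1 (e : E) g :
  \sum_(F : {set E}) g F = SS (setT :\ e) (fun G => g G + g (e |: G)).
Proof. by rewrite SS_all (SS_split _ (in_setT e)). Qed.

Lemma notin2 (e f : E) G : G \subset setT :\ e :\ f -> (e \notin G) && (f \notin G).
Proof. by rewrite !subsetD1 => /andP[/andP[_ ->] ->]. Qed.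

Section Ray.
Variables (c : nat -> R) (w : E -> R) (e f : E).
Hypothesis ef : e != f.
Let mu := fun F : {set E} => c #|F|.
Let W := setT :\ e :\ f.
Let D s := Dv c w W s.

Lemma facts G : G \subset W ->
  [/\ e \notin G, f \notin G, e \notin f |: G, f \notin e |: G &
      [/\ #|e |: G| = #|G|.+1, #|f |: G| = #|G|.+1, #|e |: (f |: G)| = #|G|.+2 &
      [/\ weight w (e |: G) = w e * weight w G, weight w (f |: G) = w f * weight w G &
          weight w (e |: (f |: G)) = w e * (w f * weight w G)]]].
Proof.
move=> /notin2 /andP[eG fG].
have eF : e \notin f |: G by rewrite in_setU1 negb_or ef eG.
have fE : f \notin e |: G by rewrite in_setU1 negb_or eq_sym ef fG.
split=> //; split; rewrite ?cardU1n //; split; rewrite ?weightU1 //.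
Qed.

Lemma Zeq : partZ mu w = (D 0 + w e * D 1) + (w f * D 1 + w e * (w f * D 2)).
Proof.
rewrite /partZ (sum_split2 _ ef) /D /Dv /SS !mulr_sumr -!big_split /=.
apply: eq_bigr => G /facts [_ _ _ _ [c1 c2 c3] [w1 w2 w3]].
rewrite /mu c1 c2 c3 w1 w2 w3 addn0 !addn1 addn2.
by congr (_ + _ + (_ + _)); rewrite mulrCA //; congr (_ * _); exact: mulrCA.
Qed.

Lemma Sef : \sum_(F : {set E} | (e \in F) && (f \in F)) mu F * weight w F = w e * (w f * D 2).
Proof.
rewrite big_mkcond /= (sum_split2 _ ef) /D /Dv /SS !mulr_sumr.
apply: eq_bigr => G hG; have [eG fG eF fE [c1 c2 c3] [w1 w2 w3]] := facts hG.
rewrite (negbTE eG) (negbTE eF) (negbTE fE) /= !setU11 /= in_setU1 setU11 orbT /=.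
rewrite /mu c3 w3 addn2 !add0r.
by rewrite mulrCA; congr (_ * _); rewrite mulrCA.
Qed.

Lemma Se : \sum_(F : {set E} | e \in F) mu F * weight w F = w e * (D 1 + w f * D 2).
Proof.
rewrite big_mkcond /= (sum_split2 _ ef) /D /Dv /SS mulrDr !mulr_sumr -big_split /=.
apply: eq_bigr => G hG; have [eG fG eF fE [c1 c2 c3] [w1 w2 w3]] := facts hG.
rewrite (negbTE eG) (negbTE eF) !setU11 /= add0r.
rewrite /mu c1 c3 w1 w3 addn2 addn1 !add0r.
by rewrite mulrCA; congr (_ + _); rewrite mulrCA; congr (_ * _); rewrite mulrCA.
Qed.

Lemma Sf : \sum_(F : {set E} | f \in F) mu F * weight w F = w f * (D 1 + w e * D 2).
Proof.
rewrite big_mkcond /= (sum_split2 _ ef) /D /Dv /SS mulrDr !mulr_sumr -big_split /=.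
apply: eq_bigr => G hG; have [eG fG eF fE [c1 c2 c3] [w1 w2 w3]] := facts hG.
rewrite (negbTE fG) (negbTE fE) !setU11 /= in_setU1 setU11 orbT /= !add0r.
rewrite /mu c2 c3 w2 w3 addn2 addn1.
congr (_ + _); first exact: mulrCA.
exact: acx.
Qed.

Lemma ray_iff : posw w -> 0 < partZ mu w ->
  (prob mu w (fun F => (e \in F) && (f \in F))
      <= prob mu w (fun F => e \in F) * prob mu w (fun F => f \in F))
  <-> D 0 * D 2 <= D 1 * D 1.
Proof.
move=> hw Z0; rewrite /prob Sef Se Sf.
set Z := partZ mu w.
have ZZ : 0 < Z * Z by apply: mulr_gt0.
rewrite -(ler_pM2r ZZ).
have Zn : Z != 0 by rewrite gt_eqF.
rewrite div1R // div2R // -subr_ge0.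
have -> : w e * (D 1 + w f * D 2) * (w f * (D 1 + w e * D 2)) -
    w e * (w f * D 2) * (Z) =
   (w e * w f) * (D 1 * D 1 - D 0 * D 2).
  by rewrite /Z Zeq rayR.
by rewrite pmulr_rge0 ?subr_ge0 // mulr_gt0.
Qed.
End Ray.


Section Size.
Variables (c : nat -> R) (w : E -> R) (e : E).
Let mu := fun F : {set E} => c #|F|.
Let W := setT :\ e.
Let D s := Dv c w W s.
Let B s := Bv c w W s.

Lemma notin1 G : G \subset W -> e \notin G.
Proof. by rewrite subsetD1 => /andP[_]. Qed.

Lemma Z1 : partZ mu w = D 0 + w e * D 1.
Proof.
rewrite /partZ (sum_split1 e) /D /Dv /SS mulr_sumr -big_split /=.
apply: eq_bigr => G /notin1 eG.
by rewrite /mu weightU1 // cardU1n // addn0 addn1 mulrCA.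
Qed.

Lemma N1eq : \sum_(F : {set E}) mu F * weight w F * (#|F|%:R * (e \in F)%:R)
   = w e * (B 1 + D 1).
Proof.
rewrite (sum_split1 e) /D /B /Dv /Bv /SS mulrDr !mulr_sumr -big_split /=.
apply: eq_bigr => G /notin1 eG.
rewrite (negbTE eG) setU11 /= mulr0n !mulr0 add0r mulr1n.
by rewrite /mu weightU1 // cardU1n // addn1 mulrSr bt2R.
Qed.

Lemma N2eq : \sum_(F : {set E}) mu F * weight w F * #|F|%:R
   = B 0 + w e * (B 1 + D 1).
Proof.
rewrite (sum_split1 e) /D /B /Dv /Bv /SS mulrDr !mulr_sumr -!big_split /=.
apply: eq_bigr => G /notin1 eG.
rewrite /mu weightU1 // cardU1n // addn1 addn0 mulrSr bt3R bt4R.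
by rewrite addrA.
Qed.

Lemma Peeq : \sum_(F : {set E} | e \in F) mu F * weight w F = w e * D 1.
Proof.
rewrite big_mkcond /= (sum_split1 e) /D /Dv /SS !mulr_sumr.
apply: eq_bigr => G /notin1 eG.
rewrite (negbTE eG) setU11 add0r.
by rewrite /mu weightU1 // cardU1n // addn1 mulrCA.
Qed.

Lemma size_suff : posw w -> (forall n, 0 <= c n) -> 0 < c 0%N * c 1%N ->
  expect mu w (fun F => #|F|%:R) * prob mu w (fun F => e \in F)
  < expect mu w (fun F => #|F|%:R * (e \in F)%:R).
Proof.
move=> hw c0 c01.
have c0p : 0 < c 0%N.
  by rewrite lt_def c0 andbT; apply: contraTneq c01 => ->; rewrite mul0r ltxx.
have Z0 : 0 < partZ mu w.
  rewrite /partZ SS_all; apply: lt_le_trans (SS_ge (subsetT set0) _).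
    by rewrite /mu cards0 /weight big_set0 mulr1.
  move=> G _; apply: mulr_ge0; first exact: c0.
  apply/ltW; exact: (weight_ge0 (fun x _ => hw x) (subsetT G)).
rewrite /expect /prob N1eq N2eq Peeq.
set Z := partZ mu w.
have ZZ : 0 < Z * Z by apply: mulr_gt0.
rewrite -(ltr_pM2r ZZ) div1R ?gt_eqF // div2R ?gt_eqF // -subr_gt0 /Z Z1 sizeR.
apply: mulr_gt0; first exact: hw.
have hW : forall x, x \in W -> 0 < w x by move=> x _; apply: hw.
have [_ G1] := G_inv c0 (erefl #|W|) hW.
apply: lt_le_trans c01 _; apply: le_trans G1 _.
by rewrite /Gf add0n mulr1n.
Qed.
End Size.


Lemma nonpos0 (y : R) : 0 <= y -> ~~ (0 < y) -> y = 0.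
Proof. by move=> h1 h2; apply/eqP; rewrite eq_le h1 andbT leNgt. Qed.

Lemma chain (m : nat) (c : nat -> R) : log_concave m c -> forall d i,
  ((i + d).+2 <= m)%N -> (forall t, (i <= t)%N -> (t <= (i + d).+2)%N -> 0 < c t) ->
  c i * c (i + d).+2 <= c i.+1 * c (i + d).+1.
Proof.
move=> LC; elim=> [|d IH] i hm hp.
  rewrite addn0 in hm *; have := LC i.+1 (ltn0Sn _) hm; by rewrite /= expr2.
rewrite addnS in hm hp *.
have hm' : ((i + d).+2 <= m)%N by apply: leq_trans hm.
have IH' := IH i hm' (fun t q1 q2 => hp t q1 (leq_trans q2 (leqnSn _))).
have L := LC (i + d).+2 (ltn0Sn _) hm; rewrite /= expr2 in L.
have p1 : 0 < c (i + d).+1 by apply: hp; clear; tolia.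
have p2 : 0 < c (i + d).+2 by apply: hp; clear; tolia.
have p3 : 0 <= c (i + d).+3 by apply/ltW/hp; clear; tolia.
have p0 : 0 <= c i by apply/ltW/hp; clear; tolia.
rewrite -(ler_pM2r (mulr_gt0 p1 p2)) [X in X <= _]shuf4 [X in _ <= X]mulrACA.
rewrite [c (i + d).+3 * _]mulrC.
apply: ler_pM => //; first exact: mulr_ge0 p0 (ltW p2).
exact: mulr_ge0 (ltW p1) p3.
Qed.

Lemma slc_trunc (m : nat) (c : nat -> R) : (forall n, 0 <= c n) ->
  (forall n, (m < n)%N -> c n = 0) -> log_concave m c ->
  (forall i j k : nat, (i <= j)%N -> (j <= k)%N -> (k <= m)%N ->
    0 < c i -> 0 < c k -> 0 < c j) -> SLC c.
Proof.
move=> c0 cz LC IV i j ij.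
have [ci|ci] := boolP (0 < c i); last first.
  by rewrite (nonpos0 (c0 i) ci) mul0r; apply: mulr_ge0.
have [cj|cj] := boolP (0 < c j.+2); last first.
  by rewrite (nonpos0 (c0 _) cj) mulr0; apply: mulr_ge0.
have jm : (j.+2 <= m)%N.
  by rewrite leqNgt; apply/negP => /cz h; move: cj; rewrite h ltxx.
rewrite -(subnKC ij); apply: (chain LC); rewrite subnKC //.
by move=> t q1 q2; apply: (IV i t j.+2).
Qed.

Lemma two_elts : (1 < #|E|)%N -> exists e f : E, e != f.
Proof.
move=> h; have : (0 < #|[set: E]|)%N by rewrite cardsT (ltn_trans _ h).
rewrite card_gt0 => /set0Pn[e _].
have : (0 < #|[set: E] :\ e|)%N.
  by move: h; rewrite -cardsT (cardsD1 e) in_setT add1n ltnS.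
rewrite card_gt0 => /set0Pn[f]; rewrite in_setD1 => /andP[fe _].
by exists e, f; rewrite eq_sym.
Qed.

Lemma cardW2 (e f : E) : e != f -> #|[set: E] :\ e :\ f| = (#|E| - 2)%N.
Proof.
move=> ef; rewrite -cardsT (cardsD1 e [set: E]) (cardsD1 f ([set: E] :\ e)).
by rewrite in_setT in_setD1 in_setT eq_sym ef /= !add1n !subSS subn0.
Qed.

Lemma Zpos (c : nat -> R) w : (forall n, 0 <= c n) -> 0 < c 0%N -> posw w ->
  0 < partZ (fun F : {set E} => c #|F|) w.
Proof.
move=> c0 cp hw; rewrite /partZ SS_all; apply: lt_le_trans (SS_ge (subsetT set0) _).
  by rewrite cards0 /weight big_set0 mulr1.
move=> G _; apply: mulr_ge0; first exact: c0.
apply/ltW; exact: (weight_ge0 (fun x _ => hw x) (subsetT G)).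
Qed.

Lemma ray_PR (c : nat -> R) (e f : E) : (forall n, 0 <= c n) -> 0 < c 0%N -> e != f ->
  rayleigh (fun F : {set E} => c #|F|) -> PR c ([set: E] :\ e :\ f).
Proof.
move=> c0 cp ef RY w' hw'.
pose w := fun z => if z \in [set: E] :\ e :\ f then w' z else 1.
have hw : posw w by move=> z; rewrite /w; case: ifP => [/hw'|_] //; exact: ltr01.
have := RY w hw e f ef; rewrite (ray_iff ef hw (Zpos c0 cp hw)).
by rewrite !(@Dv_eqw c w w') // => z zW; rewrite /w zW.
Qed.

Section Trunc.
Variables (c : nat -> R).
Let m := #|E|.
Hypothesis c0 : forall n, 0 <= c n.
Hypothesis cz : forall n, (m < n)%N -> c n = 0.
Hypothesis m1 : (0 < m)%N.
Let mu := fun F : {set E} => c #|F|.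

Lemma interval_nec : cavity_monotone mu -> forall i j k : nat,
  (i <= j)%N -> (j <= k)%N -> (k <= m)%N -> 0 < c i -> 0 < c k -> 0 < c j.
Proof.
move=> [mu0 [RY SI]] i j k ij jk km ci ck.
have cp : 0 < c 0%N by move: mu0; rewrite /mu cards0.
have [cj|cj] := boolP (0 < c j) => //; exfalso.
have cj0 := nonpos0 (c0 j) cj.
have ij' : (i < j)%N by rewrite ltn_neqAle ij andbT; apply: contraTneq ci => ->; rewrite cj0 ltxx.
have jk' : (j < k)%N by rewrite ltn_neqAle jk andbT; apply: contraTneq ck => <-; rewrite cj0 ltxx.
have m2 : (1 < m)%N by apply: leq_trans km; apply: leq_ltn_trans jk'; apply: leq_ltn_trans ij'.
have [e [f ef]] := two_elts m2.
have P := ray_PR c0 cp ef RY.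
have exl : exists t, (t < j)%N && (0 < c t) by exists i; rewrite ij' ci.
have ubl : forall t, (t < j)%N && (0 < c t) -> (t <= j)%N by move=> t /andP[/ltnW].
have exr : exists t, (j < t)%N && (0 < c t) by exists k; rewrite jk' ck.
case: (ex_maxnP exl ubl) => a /andP[aj ca] amax.
case: (ex_minnP exr) => l /andP[jl cl] lmin.
have lk : (l <= k)%N by apply: lmin; rewrite jk' ck.
apply: (PR_gap (i := a) (gg := l - a) P c0).
- move: aj jl; clear; move=> aj jl; tolia.
- rewrite cardW2 //; move: aj jl lk km m2; clear; move=> aj jl lk km m2; tolia.
- exact: ca.
- by rewrite subnKC // ltnW // (ltn_trans aj jl).
move=> hh h0 hl; apply: nonpos0 (c0 _) _.
have [t_lt|t_ge] := ltnP (a + hh) j.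
  apply/negP => pt; have := amax _ (introT andP (conj t_lt pt)).
  by rewrite -{2}(addn0 a) leq_add2l leqNgt h0.
move: t_ge; rewrite leq_eqVlt => /orP[/eqP <-|t_gt]; first by rewrite cj0 ltxx.
apply/negP => pt; have := lmin _ (introT andP (conj t_gt pt)).
rewrite leqNgt; move: hl; rewrite -(ltn_add2l a) subnKC => [-> //|].
by rewrite ltnW // (ltn_trans aj jl).
Qed.

Lemma forward : cavity_monotone mu -> log_concave m c /\ support_interval_01 m c.
Proof.
move=> CM; have IV := interval_nec CM.
move: CM => [mu0 [RY SI]].
have cp : 0 < c 0%N by move: mu0; rewrite /mu cards0.
split.
  move=> k k0 km.
  have m2 : (1 < m)%N by apply: leq_ltn_trans km.
  have [e [f ef]] := two_elts m2.
  have P := ray_PR c0 cp ef RY.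
  rewrite expr2; apply: (PR_lc P k0); rewrite cardW2 //.
  by move: k0 km; clear; move=> k0 km; tolia.
split=> //; split=> //.
apply: contraT => c1n.
have c10 := nonpos0 (c0 _) c1n.
case: (classic (exists l, (1 < l)%N && (l <= m)%N && (0 < c l))) => [[l /andP[/andP[l1 lm] cl]]|nex].
  have := IV 0%N 1%N l (leq0n _) (ltnW l1) lm cp cl.
  by rewrite c10 ltxx.
have call : forall n, (0 < n)%N -> c n = 0.
  move=> n n0; case: (leqP n m) => nm; last exact: cz.
  move: n0; rewrite leq_eqVlt => /orP[/eqP <- //|n1].
  apply: nonpos0 (c0 _) _; apply/negP => pn; apply: nex; exists n.
  by rewrite n1 nm pn.
have : (0 < #|[set: E]|)%N by rewrite cardsT.
rewrite card_gt0 => /set0Pn[e _].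
have := SI (fun _ => 1) (fun _ => ltr01) e.
have term : forall F : {set E}, mu F * #|F|%:R = 0.
  move=> F; case: (posnP #|F|) => [->|h]; first by rewrite mulr0.
  by rewrite /mu call // mul0r.
have N1 : \sum_(F : {set E}) mu F * weight (fun _ => 1) F * (#|F|%:R * (e \in F)%:R) = 0.
  apply: big1 => F _; by rewrite mulrAC mulrA term !mul0r.
have N2 : \sum_(F : {set E}) mu F * weight (fun _ => 1) F * #|F|%:R = 0.
  apply: big1 => F _; by rewrite mulrAC term mul0r.
rewrite /expect N1 N2 !mul0r.
by rewrite ltxx.
Qed.

Lemma backward : log_concave m c -> support_interval_01 m c -> cavity_monotone mu.
Proof.
move=> LC [cp [c1 IV]].
have S := slc_trunc c0 cz LC IV.
split; first by rewrite /mu cards0.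
split.
  move=> w hw e f ef; rewrite (ray_iff ef hw (Zpos c0 cp hw)).
  have hW : forall x, x \in [set: E] :\ e :\ f -> 0 < w x by move=> x _; apply: hw.
  exact: (D_SLC S (erefl _) hW (leqnn 0)).
move=> w hw e; apply: size_suff => //.
exact: mulr_gt0.
Qed.
End Trunc.

End Main.

Unset Implicit Arguments.

Lemma trunc_main (R : rcfType) (E : finType) (c : nat -> R) :
  (0 < #|E|)%N -> (forall k : nat, (k <= #|E|)%N -> 0 <= c k) ->
  (cavity_monotone (fun F : {set E} => c #|F|) <->
   log_concave #|E| c /\ support_interval_01 #|E| c).
Proof.
move=> m1 c0.
pose c' := fun n => if (n <= #|E|)%N then c n else 0.
have c0' : forall n, 0 <= c' n by move=> n; rewrite /c'; case: ifP => // /c0.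
have cz : forall n, (#|E| < n)%N -> c' n = 0.
  by move=> n h; rewrite /c' leqNgt h.
have ce : forall n, (n <= #|E|)%N -> c' n = c n by move=> n h; rewrite /c' h.
clearbody c'.
have muE : (fun F : {set E} => c #|F|) = (fun F : {set E} => c' #|F|).
  by apply: functional_extensionality => F; rewrite ce // max_card.
have LCe : log_concave #|E| c' <-> log_concave #|E| c.
  have H : forall k, (k < #|E|)%N ->
      [/\ c' k.-1 = c k.-1, c' k.+1 = c k.+1 & c' k = c k].
    move=> k km; split; apply: ce => //; last exact: ltnW.
    by apply: leq_trans (leq_pred k) (ltnW km).
  split=> L k k0 km; have [e1 e2 e3] := H k km.
    by move: (L k k0 km); rewrite e1 e2 e3.
  by rewrite e1 e2 e3; exact: L.
have SIe : support_interval_01 #|E| c' <-> support_interval_01 #|E| c.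
  have h0 : (0 <= #|E|)%N by [].
  split=> -[p0 [p1 IV]]; (split; [|split]).
  - by rewrite -ce.
  - by rewrite -ce.
  - move=> i j k ij jk km; have jm := leq_trans jk km; have im := leq_trans ij jm.
    rewrite -(ce _ jm) -(ce _ im) -(ce _ km); exact: IV.
  - by rewrite ce.
  - by rewrite ce.
  - move=> i j k ij jk km; have jm := leq_trans jk km; have im := leq_trans ij jm.
    rewrite (ce _ jm) (ce _ im) (ce _ km); exact: IV.
rewrite muE -LCe -SIe; split.
  exact: forward.
by case; apply: backward.
Qed.

Theorem mainTheorem3 (R : rcfType) (E : finType) :
  (0 < #|E|)%N ->
  (forall c : nat -> R, (forall k : nat, (k <= #|E|)%N -> 0 <= c k) ->
     (cavity_monotone (fun F : {set E} => c #|F|) <->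
      log_concave #|E| c /\ support_interval_01 #|E| c)) /\
  (forall b : nat, (1 <= b)%N ->
     cavity_monotone (fun F : {set E} => if (#|F| <= b)%N then (1 : R) else 0)).
Proof.
move=> m1; split; first by move=> c; exact: trunc_main.
move=> b b1.
pose cb := fun n : nat => if (n <= b)%N then (1 : R) else 0.
have cb0 : forall n, 0 <= cb n by move=> n; rewrite /cb; case: ifP.
apply/(trunc_main R E cb m1 (fun k _ => cb0 k)); split.
  move=> k k0 km; rewrite /cb expr2.
  case: (leqP k b) => kb.
    rewrite ?kb /= mulr1; case: ifP => _; case: ifP => _; rewrite ?mul0r ?mul1r //.
  have h1 : (k <= b)%N = false by rewrite leqNgt kb.
  have h2 : (k.+1 <= b)%N = false by rewrite leqNgt ltnS (ltnW kb).
  by rewrite ?h1 h2 !mulr0.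
split; first by rewrite /cb leq0n ltr01.
split; first by rewrite /cb b1 ltr01.
move=> i j k ij jk km _ ck; rewrite /cb in ck *.
case: (leqP k b) ck => kb ck; last by rewrite ltxx in ck.
by rewrite (leq_trans jk kb) ltr01.
Qed.
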